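(* The number of representatives for vertices on $P(s,t)$ satisfies $|\mathcal{R}_V|\le 5\sqrt{Mn}$.
   Context: $G=(V,E,w)$ is an undirected graph on $n$ vertices with integer edge weights in $[1,M]$, $s$ a source vertex, $T_s$ a shortest path tree rooted at $s$, and $P(s,t)$ the $s$-$t$ path in $T_s$. $d(\cdot,\cdot)$ is the distance in $G$, $d(s,t,v)$ the length of a shortest $s$-$t$ path in $G-v$ (vertex $v$ removed); a replacement path for $v$ is a shortest $s$-$t$ path in $G-v$. $P[a..b]$ denotes the subpath of $P$ from $a$ to $b$. Every replacement path is assumed to consist of a common prefix with $P(s,t)$, a detour part disjoint from $P(s,t)$ (apart from its endpoints), and a common suffix. Fix a target $t$ and a vertex $x$ on $P(s,t)$ (the pivot $D[t]$, the last vertex on $P(s,t)$ from a pivot set $D$). Let $v_1,\dots,v_k$ be the vertices $v\neq s$ on $P(s,t)[s..x]$ with $d(s,t,v)<d(s,x,v)+d(x,t)$ (far case II), ordered by increasing distance from $s$. In this order, each $v_i$ chooses a representative replacement path: if one of its replacement paths was already chosen by an earlier vertex it takes that one, otherwise an arbitrary one. $\mathcal{R}_V$ is the set of chosen representatives. *)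

(* Defs.v *)
From mathcomp Require Import all_boot all_order all_algebra.
Set Implicit Arguments. Unset Strict Implicit. Unset Printing Implicit Defensive.

Section Graph.
Variables (V : finType) (e : rel V) (w : V -> V -> nat).

Definition walk (a b : V) (p : seq V) : bool :=
  if p is y :: q then [&& y == a, last y q == b & path e y q] else false.

Definition plen (p : seq V) : nat :=
  if p is y :: q then sumn (pairmap w y q) else 0.

Definition avoids (A : pred V) (p : seq V) : bool := all (predC A) p.

Definition shortest_in (A : pred V) (a b : V) (p : seq V) : Prop :=
  [/\ walk a b p, avoids A p &
      forall q, walk a b q -> avoids A q -> plen p <= plen q].

Definition replacement (s t v : V) (p : seq V) : Prop :=
  shortest_in (fun y => y == v) s t p.

(* far case II:  d(s,t,v) < d(s,x,v) + d(x,t)  (with d = +oo if unreachable) *)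
Definition farII (s t x v : V) : Prop :=
  exists R, replacement s t v R /\
    forall q1 q2, walk s x q1 -> avoids (fun y => y == v) q1 ->
                  walk x t q2 -> plen R < plen q1 + plen q2.

End Graph.

(* Main.v *)
Require Import Defs.
From mathcomp Require Import all_boot all_order all_algebra.
From mathcomp Require Import zify.
Set Implicit Arguments. Unset Strict Implicit. Unset Printing Implicit Defensive.

Section G.
Variables (V : finType) (e : rel V) (w : V -> V -> nat) (M : nat).
Hypothesis esym : forall a b, e a b = e b a.
Hypothesis wsym : forall a b, e a b -> w a b = w b a.
Hypothesis wb : forall a b, e a b -> (1 <= w a b <= M)%N.

Local Notation walk := (walk e).
Local Notation plen := (plen w).

Lemma walk_cons a b p : walk a b p -> exists q, p = a :: q /\ last a q = b /\ path e a q.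
Proof. by rewrite /Defs.walk; case: p => // y q /and3P[/eqP-> /eqP <- ?]; exists q. Qed.

Lemma walk_nil a b : ~ walk a b [::].
Proof. by []. Qed.

Lemma walk_join a b c p q : walk a b p -> walk b c q -> walk a c (p ++ behead q).
Proof.
move=> /walk_cons[p' [-> [Hl Hp]]] /walk_cons[q' [-> [Hl' Hq]]] /=.
rewrite /Defs.walk /=.
by rewrite eqxx last_cat Hl Hl' eqxx cat_path Hp Hl Hq.
Qed.

Lemma plen_join a b c p q : walk a b p -> walk b c q ->
  plen (p ++ behead q) = plen p + plen q.
Proof.
move=> /walk_cons[p' [-> [Hl Hp]]] /walk_cons[q' [-> [Hl' Hq]]] /=.
rewrite /Defs.plen /=.
by rewrite pairmap_cat sumn_cat Hl.
Qed.

Lemma walk_cat_split a b y r t : walk a b ((y :: r) ++ t) ->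
  walk a (last y r) (y :: r) /\ walk (last y r) b (last y r :: t).
Proof.
rewrite /Defs.walk /= => /and3P[/eqP -> /eqP Hlast Hpath].
rewrite last_cat in Hlast; rewrite cat_path in Hpath; case/andP: Hpath => Hp1 Hp2.
by rewrite !eqxx Hp1 Hlast Hp2 eqxx.
Qed.

Lemma walk_split a b p n : walk a b p -> n < size p ->
  walk a (nth a p n) (take n.+1 p) /\ walk (nth a p n) b (drop n p).
Proof.
move=> Hw Hn; have := Hw; move=> /walk_cons[q [Ep [Hl Hp]]].
have Hd : drop n p = nth a p n :: drop n.+1 p by rewrite (drop_nth a Hn).
have Hlt : last a (take n.+1 p) = nth a p n.
  by rewrite (last_nth a) size_takel //= nth_take.
rewrite Hd -Hlt.
move: Hw; rewrite -{1}(cat_take_drop n.+1 p).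
have : take n.+1 p <> [::] by rewrite Ep.
case: (take n.+1 p) => [|y r] // _ /walk_cat_split.
by [].
Qed.


Lemma plen_split a b p n : walk a b p -> n < size p ->
  plen p = plen (take n.+1 p) + plen (drop n p).
Proof.
move=> Hw Hn; have [H1 H2] := walk_split Hw Hn.
rewrite -(plen_join H1 H2); congr plen.
by rewrite (drop_nth a Hn) /= cat_take_drop.
Qed.

Lemma walk_edge a b : e a b -> walk a b [:: a; b].
Proof. by move=> H; rewrite /Defs.walk /= !eqxx H. Qed.

Lemma walk_rev a b p : walk a b p -> walk b a (rev p) /\ plen (rev p) = plen p.
Proof.
move=> /walk_cons[q [-> [Hl Hp]]]; elim: q a Hl Hp => [|y q IH] a Hl Hp.
  by rewrite /= in Hl; subst; rewrite /Defs.walk /= eqxx.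
rewrite /= in Hl Hp; case/andP: Hp => Hay Hp.
have [H1 H2] := IH y Hl Hp.
have He : walk y a [:: y; a] by apply: walk_edge; rewrite esym.
have -> : rev [:: a, y & q] = rev (y :: q) ++ behead [:: y; a].
  by rewrite rev_cons cats1.
split; first exact: walk_join H1 He.
rewrite (plen_join H1 He) H2 /Defs.plen /= (wsym Hay); lia.
Qed.

Lemma plen_le a b p : walk a b p -> plen p <= (size p).-1 * M.
Proof.
move=> /walk_cons[q [-> [_ Hp]]] /=; rewrite /Defs.plen.
elim: q a Hp => [|y q IH] a //= /andP[Hay Hp].
have := wb Hay; have := IH y Hp; rewrite mulSn; lia.
Qed.

Lemma plen_ge a b p : walk a b p -> (size p).-1 <= plen p.
Proof.
move=> /walk_cons[q [-> [_ Hp]]] /=; rewrite /Defs.plen.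
elim: q a Hp => [|y q IH] a //= /andP[Hay Hp].
have := wb Hay; have := IH y Hp; lia.
Qed.

Lemma shortest_uniq A a b p : shortest_in e w A a b p -> uniq p.
Proof.
case=> Hw Hav Hmin; apply: contraT => /(uniqPn a) [i [j [Hij Hj Heq]]].
have {}Hj : j < size p := Hj.
have Hi : i < size p by lia.
have [H1 H2] := walk_split Hw Hi.
have [H3 H4] := walk_split Hw Hj.
rewrite -Heq in H3 H4.
have Hq := walk_join H1 H4.
have := Hmin _ Hq.
have Hav' : avoids A (take i.+1 p ++ behead (drop j p)).
  rewrite /avoids all_cat; apply/andP; split; apply/allP => z Hz; move/allP: Hav; apply.
    exact: mem_take Hz.
  by apply: mem_drop (mem_behead Hz).
move/(_ Hav'); rewrite (plen_join H1 H4).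
rewrite (plen_split Hw Hi).
have Hsz : j - i < size (drop i p) by rewrite size_drop; lia.
have [H5 H6] := walk_split H2 Hsz.
rewrite (plen_split H2 Hsz) drop_drop subnK; last lia.
have := plen_ge H5; rewrite size_takel; last by rewrite size_drop; lia.
lia.
Qed.

End G.


Section G2.
Variables (V : finType) (e : rel V) (w : V -> V -> nat) (M : nat) (s t x : V) (P : seq V).
Hypothesis esym : forall a b, e a b = e b a.
Hypothesis wsym : forall a b, e a b -> w a b = w b a.
Hypothesis wb : forall a b, e a b -> (1 <= w a b <= M)%N.
Hypothesis HP : shortest_in e w pred0 s t P.
Hypothesis HxP : x \in P.

Local Notation walk := (walk e).
Local Notation plen := (plen w).

Lemma uP : uniq P.
Proof. exact: (shortest_uniq wb HP). Qed.

Lemma walkP : walk s t P.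
Proof. by case: HP. Qed.

Lemma idx_drop y n : y \in drop n P -> n <= index y P.
Proof.
move=> Hy; have HyP : y \in P by apply: mem_drop Hy.
rewrite leqNgt; apply/negP => Hlt.
have Ht : y \in take n P by rewrite in_take.
have := uP; rewrite -(cat_take_drop n P) cat_uniq => /and3P[_ /hasPn H _].
by move: (H y Hy); rewrite Ht.
Qed.

Lemma in_drop_idx y n : y \in P -> n <= index y P -> y \in drop n P.
Proof.
move=> Hy Hn; have := Hy; rewrite -{1}(cat_take_drop n P) mem_cat in_take //.
by rewrite ltnNge Hn.
Qed.

Lemma idx_take y n : y \in take n P -> index y P < n.
Proof. exact: index_ltn. Qed.

Definition dec u R i j D := [/\ R = take i.+1 P ++ D ++ drop j P,
  all (fun y => y \notin P) D, i < index u P, index u P < j & index x P < j].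

Lemma avoid_mem (A : pred V) (p : seq V) (y : V) : avoids A p -> y \in p -> ~~ A y.
Proof. by move/allP => H /H. Qed.

Hypothesis Hdec : forall v, v \in P -> v != s -> forall Rp, replacement e w s t v Rp ->
     exists i j D, Rp = take i.+1 P ++ D ++ drop j P /\ all (fun y => y \notin P) D.

Lemma avoid_sub (A : pred V) (p q : seq V) : avoids A p -> {subset q <= p} -> avoids A q.
Proof. by move=> /allP H Hs; apply/allP => y /Hs /H. Qed.

Lemma get_dec u R : u \in P -> u != s -> index u P <= index x P ->
  farII e w s t x u -> replacement e w s t u R -> exists i j D, dec u R i j D.
Proof.
move=> HuP Hus Hux Hfar HR.
have [i [j [D [ER HD]]]] := Hdec HuP Hus HR.
case: (HR) => HRw HRav HRmin.
have Hi : i < index u P.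
  rewrite ltnNge; apply/negP => Hle.
  have : u \in R by rewrite ER mem_cat in_take // ltnS Hle.
  by move/(avoid_mem HRav); rewrite eqxx.
have Hj : index u P < j.
  rewrite ltnNge; apply/negP => Hle.
  have : u \in R by rewrite ER !mem_cat in_drop_idx ?orbT.
  by move/(avoid_mem HRav); rewrite eqxx.
have Hxj : index x P < j.
  rewrite ltnNge; apply/negP => Hle.
  have HxR : x \in R by rewrite ER !mem_cat in_drop_idx ?orbT ?HxP.
  have Hn : index x R < size R by rewrite index_mem.
  have [H1 H2] := walk_split HRw Hn; rewrite nth_index // in H1 H2.
  case: Hfar => Rf [[HRfw HRfav _] Hlt].
  have Hav1 : avoids (fun y => y == u) (take (index x R).+1 R).
    by apply: avoid_sub HRav _ => y /mem_take.
  have := Hlt _ _ H1 Hav1 H2.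
  rewrite -(plen_split w HRw Hn).
  have := HRmin _ HRfw HRfav; lia.
by exists i, j, D; split.
Qed.

Lemma avoid_dec u R i j D u' : dec u R i j D -> u' \in P -> i < index u' P ->
  index u' P <= index x P -> avoids (fun y => y == u') R.
Proof.
case=> -> HD _ _ Hxj Hu' Hi Hux.
apply/allP => y; rewrite !mem_cat => /or3P[H|H|H] /=; apply/negP => /eqP Hyu; subst y.
- by have := idx_take H; lia.
- by move/allP: HD => /(_ _ H); rewrite Hu'.
- by have := idx_drop H; lia.
Qed.

Lemma filter_dec u R i j D : dec u R i j D -> filter (fun y => y \notin P) R = D.
Proof.
case=> -> HD _ _ _; rewrite !filter_cat (all_filterP HD).
rewrite (@eq_in_filter _ _ pred0 (take i.+1 P)); last by move=> y /mem_take ->.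
rewrite (@eq_in_filter _ _ pred0 (drop j P)); last by move=> y /mem_drop ->.
by rewrite !filter_pred0 cats0.
Qed.

Definition pseq (r : seq V) := if r is y :: r' then path e y r' else true.

Lemma pseq_cat p q : pseq (p ++ q) -> pseq p /\ pseq q.
Proof.
case: p => [|y p] //= H; rewrite cat_path in H; case/andP: H => H1 H2; split => //.
by case: q H2 => //= z q /andP[].
Qed.

Lemma plen_cat_le p q : pseq (p ++ q) -> plen (p ++ q) <= plen p + M + plen q.
Proof.
case: p => [|y p]; first by rewrite /=; lia.
case: q => [|z q]; first by rewrite cats0; lia.
rewrite /= cat_path /Defs.plen /= => /andP[_ /= /andP[Hez _]].
rewrite pairmap_cat sumn_cat /= ; have := wb Hez; lia.
Qed.

Lemma plen_pseq_le p : pseq p -> plen p <= (size p).-1 * M.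
Proof.
case: p => [|y q] //= Hp; rewrite /Defs.plen.
elim: q y Hp => [|z q IH] y //= /andP[Hay Hp].
have := wb Hay; have := IH z Hp; rewrite mulSn; lia.
Qed.

Lemma walk_pseq a b p : walk a b p -> pseq p.
Proof. by move=> /walk_cons[q [-> [_ Hp]]]. Qed.

Lemma plen_drop k q : plen (drop k q) <= plen q.
Proof.
elim: q k => [|y q IH] [|k] //=.
apply: leq_trans (IH k) _; case: q {IH} => [|z q] //.
rewrite /Defs.plen /=; lia.
Qed.

Lemma idx_lt_size u : u \in P -> index u P < size P.
Proof. by rewrite index_mem. Qed.

Lemma len_dec u R i j D : dec u R i j D -> u \in P -> walk s t R ->
  plen R <= plen P + (size D).+2 * M.
Proof.
move=> [ER HD Hi Hj Hxj] HuP HRw.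
have HiP : i < size P by have := idx_lt_size HuP; lia.
have Hps := walk_pseq HRw; rewrite ER in Hps.
have [Hp1 Hp2] := pseq_cat Hps.
have [Hp3 Hp4] := pseq_cat Hp2.
have L1 := plen_cat_le Hps.
have L2 := plen_cat_le Hp2.
have L3 := plen_pseq_le Hp3.
have E1 := plen_split w walkP HiP.
have L4 : plen (drop j P) <= plen (drop i P).
  by rewrite -(subnK (ltnW (ltn_trans Hi Hj))) -drop_drop plen_drop.
rewrite ER; case: (size D) L3 => [|k] L3; rewrite /= in L3; rewrite !mulSn in L3 *; lia.
Qed.

Lemma mem_drop_take (y : V) a b (q : seq V) : y \in drop a (take b q) -> y \in drop a q.
Proof.
case: (leqP a b) => Hab.
  by rewrite -(subnK Hab) -take_drop => /mem_take.
by rewrite drop_oversize // size_take; case: ltnP; lia.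
Qed.

Lemma core u R i j D u' R' i' j' D' h :
  dec u R i j D -> replacement e w s t u R -> u \in P ->
  dec u' R' i' j' D' -> replacement e w s t u' R' -> u' \in P ->
  index u P < i' -> index u' P <= index x P ->
  plen P + 2 * h * M < plen R' ->
  forall z, z \in take h D' -> z \notin D.
Proof.
move=> [ER HD Hi Hj Hxj] [HRw HRav HRmin] HuP [ER' HD' Hi' Hj' Hxj'] [HR'w HR'av HR'min] Hu'P.
move=> Hui' Hu'x Hlen z Hz'; apply/negP => Hz.
have HzD' : z \in D' := mem_take Hz'.
have Hp' : index z D' < h := index_ltn Hz'.
have HiP : i < size P := ltn_trans Hi (idx_lt_size HuP).
have Hi'P : i' < size P := ltn_trans Hi' (idx_lt_size Hu'P).
have HA : size (take i.+1 P) = i.+1 := size_takel HiP.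
have HA' : size (take i'.+1 P) = i'.+1 := size_takel Hi'P.
have HpD : index z D < size D by rewrite index_mem.
have HpD' : index z D' < size D' by rewrite index_mem.
set p := index z D in HpD; set p' := index z D' in Hp' HpD'.
have Hn1 : i.+1 + p < size R by rewrite ER !size_cat HA; clear -HpD; lia.
have Hn1' : i'.+1 + p' < size R' by rewrite ER' !size_cat HA'; clear -HpD'; lia.
have Hz1 : nth s R (i.+1 + p) = z.
  by rewrite ER nth_cat HA ltnNge leq_addr /= addKn nth_cat HpD nth_index.
have Hz1' : nth s R' (i'.+1 + p') = z.
  by rewrite ER' nth_cat HA' ltnNge leq_addr /= addKn nth_cat HpD' nth_index.
have [H1 H2] := walk_split HRw Hn1; rewrite Hz1 in H1 H2.
have [H1' H2'] := walk_split HR'w Hn1'; rewrite Hz1' in H1' H2'.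
set R1 := take (i.+1 + p).+1 R in H1; set R2 := drop (i.+1 + p) R in H2.
set R1' := take (i'.+1 + p').+1 R' in H1'.
have HsR1' : size R1' = (i'.+1 + p').+1 by rewrite /R1' size_takel.
have Hi'R1 : i' < size R1' by rewrite HsR1'; clear; lia.
have Hy0 : nth s R1' i' = nth s P i'.
  by rewrite /R1' nth_take; [rewrite ER' nth_cat HA' ltnSn nth_take | clear; lia].
have [HA1 HG] := walk_split H1' Hi'R1; rewrite Hy0 in HA1 HG.
have [HGr HGl] := walk_rev esym wsym HG.
have [HP1 HP2] := walk_split walkP Hi'P.
have HW := walk_join (walk_join H1 HGr) HP2.
have HWl : plen ((R1 ++ behead (rev (drop i' R1'))) ++ behead (drop i' P)) =
    plen R1 + plen (drop i' R1') + plen (drop i' P).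
  by rewrite (plen_join w (walk_join H1 HGr) HP2) (plen_join w H1 HGr) HGl.
have HWav : avoids (fun y => y == u) ((R1 ++ behead (rev (drop i' R1'))) ++ behead (drop i' P)).
  apply/allP => y; rewrite !mem_cat => /orP[/orP[Hy|Hy]|Hy].
  - by move/allP: HRav; apply; apply: mem_take Hy.
  - move/mem_behead: Hy; rewrite mem_rev => /mem_drop_take.
    rewrite ER' drop_cat HA' ltnSn !mem_cat => /or3P[Hy|Hy|Hy] /=; apply/negP => /eqP Hyu; subst y.
    + by have := idx_drop (mem_drop_take Hy); clear -Hui'; lia.
    + by move/allP: HD' => /(_ _ Hy); rewrite HuP.
    + by have := idx_drop Hy; clear -Hui' Hi' Hj'; lia.
  - move/mem_behead: Hy => Hy; apply/negP => /eqP Hyu; subst y.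
    by have := idx_drop Hy; clear -Hui'; lia.
have L1 := HRmin _ HW HWav.
rewrite HWl (plen_split w HRw Hn1) -/R1 -/R2 in L1.
have HW2 := walk_join H1' H2.
have HW2av : avoids (fun y => y == u') (R1' ++ behead R2).
  apply/allP => y; rewrite mem_cat => /orP[Hy|Hy].
  - by move/allP: HR'av; apply; apply: mem_take Hy.
  - move/mem_behead: Hy; rewrite /R2 -(subnKC (leq_addr p i.+1)) addKn addnC -drop_drop.
    move/mem_drop; rewrite ER drop_cat HA ltnn subnn drop0 mem_cat => /orP[Hy|Hy];
      apply/negP => /eqP Hyu; subst y.
    + by move/allP: HD => /(_ _ Hy); rewrite Hu'P.
    + by have := idx_drop Hy; clear -Hxj Hu'x; lia.
have L2 := HR'min _ HW2 HW2av.
rewrite (plen_join w H1' H2) (plen_split w H1' Hi'R1) in L2.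
have E3 : take i'.+1 R1' = take i'.+1 P.
  by rewrite /R1' take_takel; [rewrite ER' take_size_cat | clear; lia].
rewrite E3 in L2.
have E4 := plen_split w walkP Hi'P.
have L3 := plen_le wb HG.
have Hsz : (size (drop i' R1')).-1 <= h by rewrite size_drop HsR1'; clear -Hp'; lia.
have L5 : (size (drop i' R1')).-1 * M <= h * M by apply: leq_mul.
move: L1 L2 L3 L5 Hlen E4; rewrite -mulnA.
move: (plen (drop i' R1')) ((size (drop i' R1')).-1 * M) (h * M) => a b c; clear; lia.
Qed.

End G2.

Lemma arith_main m M n : 0 < M -> m + (m %/ 4) * ((m %/ 4) %/ M) <= n -> m ^ 2 <= 25 * M * n.
Proof.
move=> HM Hn.
have E1 := divn_eq m 4; have E2 := divn_eq (m %/ 4) M.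
have L1 : m %% 4 < 4 by rewrite ltn_mod.
have L2 : (m %/ 4) %% M < M by rewrite ltn_mod.
move: (m %/ 4) ((m %/ 4) %/ M) ((m %/ 4) %% M) (m %% 4) E1 E2 L1 L2 Hn => q h r1 r0 E1 E2 L1 L2 Hn.
nia.
Qed.



Section RM.
Import Order.TTheory GRing.Theory Num.Theory.
Local Open Scope ring_scope.
Lemma real_main (R : rcfType) (m N : nat) : (m ^ 2 <= 25 * N)%N ->
  ((m%:R : R) <= 5%:R * Num.sqrt (N%:R)).
Proof.
move=> H.
have -> : (5%:R : R) = Num.sqrt (5%:R ^+ 2) by rewrite sqrtr_sqr ger0_norm.
rewrite -sqrtrM ?exprn_ge0 // -[X in (X <= _)%R](@ger0_norm _ (m%:R : R)) // -sqrtr_sqr.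
by rewrite ler_sqrt ?mulr_ge0 ?exprn_ge0 // -!natrX -natrM ler_nat.
Qed.

End RM.

Section G3.
Variables (V : finType) (e : rel V) (w : V -> V -> nat) (M : nat) (s t x : V) (P : seq V)
  (vs : seq V) (rep : V -> seq V).
Hypothesis esym : forall a b, e a b = e b a.
Hypothesis wsym : forall a b, e a b -> w a b = w b a.
Hypothesis wb : forall a b, e a b -> (1 <= w a b <= M)%N.
Hypothesis HP : shortest_in e w pred0 s t P.
Hypothesis HxP : x \in P.
Hypothesis Hdec : forall v, v \in P -> v != s -> forall Rp, replacement e w s t v Rp ->
     exists i j D, Rp = take i.+1 P ++ D ++ drop j P /\ all (fun y => y \notin P) D.
Hypothesis Hvu : uniq vs.
Hypothesis Hvsort : sorted (fun a b => (index a P < index b P)%N) vs.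
Hypothesis Hvs : forall v, v \in vs <->
     [/\ v \in P, v != s, (index v P <= index x P)%N & farII e w s t x v].
Hypothesis Hgr : forall i, (i < size vs)%N ->
     replacement e w s t (nth s vs i) (rep (nth s vs i)) /\
     ((exists j, (j < i)%N /\ replacement e w s t (nth s vs i) (rep (nth s vs j))) ->
      exists j, (j < i)%N /\ rep (nth s vs i) = rep (nth s vs j)).

Local Notation plen := (plen w).
Local Notation dec := (dec x P).

Definition rs := map rep vs.
Definition I := sort leq [seq index r rs | r <- undup rs].
Definition m := size I.
Definition kk l := nth 0 I l.
Definition uu l := nth s vs (kk l).
Definition RR l := rep (uu l).
Definition DD l := filter (fun y => y \notin P) (RR l).

Lemma size_I : m = size (undup rs).
Proof. by rewrite /m /I size_sort size_map. Qed.

Lemma I_prop k : k \in I -> k < size vs /\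
  forall j, j < k -> rep (nth s vs j) != rep (nth s vs k).
Proof.
rewrite /I mem_sort => /mapP[r]; rewrite mem_undup => Hr ->.
have Hk : index r rs < size vs by rewrite -(size_map rep) index_mem.
split => // j Hj.
have Hjs : j < size vs by apply: ltn_trans Hj Hk.
rewrite -!(nth_map s (rep s)) // nth_index //.
by have := before_find (rep s) Hj => /= ->.
Qed.

Lemma I_sorted : sorted ltn I.
Proof.
rewrite ltn_sorted_uniq_leq sort_uniq sort_sorted ?andbT; last exact: leq_total.
rewrite map_inj_in_uniq ?undup_uniq // => a b; rewrite !mem_undup => Ha Hb Hab.
by rewrite -(nth_index (rep s) Ha) Hab nth_index.
Qed.

Lemma kk_lt l l' : l < l' -> l' < m -> kk l < kk l'.
Proof.
move=> H1 H2; apply: (sorted_ltn_nth ltn_trans 0 I_sorted); rewrite ?inE //;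
  try exact: ltn_trans H1 H2.
Qed.

Lemma kk_mem l : l < m -> kk l \in I.
Proof. by move=> H; apply: mem_nth. Qed.

Lemma kk_size l : l < m -> kk l < size vs.
Proof. by move/kk_mem/I_prop => []. Qed.

Lemma uu_props l : l < m ->
  [/\ uu l \in P, uu l != s, (index (uu l) P <= index x P)%N & farII e w s t x (uu l)].
Proof. by move=> H; apply/Hvs; apply: mem_nth; apply: kk_size. Qed.

Lemma RR_rep l : l < m -> replacement e w s t (uu l) (RR l).
Proof. by move=> H; have [] := Hgr (kk_size H). Qed.

Lemma RR_notrep l l' : l < l' -> l' < m -> ~ replacement e w s t (uu l') (RR l).
Proof.
move=> H1 H2 Hr.
have [_ H] := Hgr (kk_size H2).
have [j [Hj Heq]] := H (ex_intro _ (kk l) (conj (kk_lt H1 H2) Hr)).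
have [_ Hne] := I_prop (kk_mem H2).
by move: (Hne j Hj); rewrite -/(uu l') Heq eqxx.
Qed.

Lemma uu_idx_lt l l' : l < l' -> l' < m -> index (uu l) P < index (uu l') P.
Proof.
move=> H1 H2.
apply: (sorted_ltn_nth (leT := fun a b => (index a P < index b P)%N) _ s Hvsort).
- by move=> a b c /= Hab Hbc; apply: ltn_trans Hab Hbc.
- by rewrite inE; apply: kk_size; apply: ltn_trans H1 H2.
- by rewrite inE; apply: kk_size.
- exact: kk_lt.
Qed.

Lemma RR_dec l : l < m -> exists i j D, dec (uu l) (RR l) i j D.
Proof.
move=> H; have [H1 H2 H3 H4] := uu_props H.
exact: (get_dec HxP Hdec H1 H2 H3 H4 (RR_rep H)).
Qed.

Lemma RR_walk l : l < m -> walk e s t (RR l).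
Proof. by move/RR_rep => []. Qed.

Lemma L_dec l l' : l < l' -> l' < m -> plen (RR l') < plen (RR l).
Proof.
move=> H1 H2.
have Hl : l < m by apply: ltn_trans H1 H2.
have [i [j [D Hd]]] := RR_dec Hl.
have [Hu'P _ Hu'x _] := uu_props H2.
have Hi : i < index (uu l') P.
  case: Hd => _ _ Hi _ _; apply: ltn_trans Hi (uu_idx_lt H1 H2).
have Hav := avoid_dec wb HP HxP Hd Hu'P Hi Hu'x.
have [_ _ Hmin'] := RR_rep H2.
have Hle := Hmin' _ (RR_walk Hl) Hav.
rewrite ltn_neqAle Hle andbT; apply/negP => /eqP Heq.
apply: (RR_notrep H1 H2); split => //; first exact: RR_walk.
by move=> q Hq Hqa; rewrite -Heq; apply: Hmin'.
Qed.

Lemma i_ge l l' i j D : l < l' -> l' < m -> dec (uu l') (RR l') i j D ->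
  index (uu l) P <= i.
Proof.
move=> H1 H2 Hd; rewrite leqNgt; apply/negP => Hi.
have Hl : l < m by apply: ltn_trans H1 H2.
have [HuP _ Hux _] := uu_props Hl.
have Hav := avoid_dec wb HP HxP Hd HuP Hi Hux.
have [_ _ Hmin] := RR_rep Hl.
have := Hmin _ (RR_walk H2) Hav.
by rewrite leqNgt (L_dec H1 H2).
Qed.

Lemma L_ge_aux d l : l + d < m -> plen (RR (l + d)) + d <= plen (RR l).
Proof.
elim: d => [|d IH] H; first by rewrite addn0 addn0.
have H' : l + d < m by apply: ltn_trans H; rewrite addnS.
have := IH H'; have := @L_dec (l + d) (l + d.+1) ltac:(by rewrite addnS) H.
by move: (plen (RR (l + d))) (plen (RR (l + d.+1))) (plen (RR l)); clear; lia.
Qed.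

Lemma L_ge l : l < m -> plen P + (m - 1 - l) <= plen (RR l).
Proof.
move=> H.
have H' : l + (m - 1 - l) < m by clear -H; lia.
have := L_ge_aux H'.
have Hlast : plen P <= plen (RR (l + (m - 1 - l))).
  case: HP => _ _ Hmin; apply: Hmin; first exact: RR_walk.
  by apply/allP.
by move: (plen P) (plen (RR (l + (m - 1 - l)))) (plen (RR l)) Hlast; clear; lia.
Qed.

Definition qq := m %/ 4.
Definition hh := qq %/ M.
Definition FF k := take hh (DD (2 * k)).

Lemma two_lt k : k < qq -> 2 * k < m.
Proof. rewrite /qq => H; have := leq_divM m 4; clear -H; lia. Qed.

Lemma Hlen k : k < qq -> plen P + 2 * hh * M < plen (RR (2 * k)).
Proof.
move=> H; have H2 := two_lt H.
have := L_ge H2; have := leq_divM qq M; rewrite -/hh.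
have := leq_divM m 4; rewrite -/qq.
rewrite -mulnA; move: (hh * M) (plen P) (plen (RR (2 * k))) => a b c.
clear -H; lia.
Qed.

Lemma DD_dec k : k < m -> exists i j, dec (uu k) (RR k) i j (DD k).
Proof.
move=> H; have [i [j [D Hd]]] := RR_dec H.
by exists i, j; rewrite /DD (filter_dec Hd).
Qed.

Lemma size_FF k : 0 < M -> k < qq -> size (FF k) = hh.
Proof.
move=> HM H; have H2 := two_lt H.
have [i [j Hd]] := DD_dec H2.
have [HuP _ _ _] := uu_props H2.
have L := len_dec wb HP HxP Hd HuP (RR_walk H2).
have L2 := Hlen H.
rewrite /FF size_takel //.
have : 2 * hh * M < (size (DD (2 * k))).+2 * M.
  by move: L L2; move: (plen P) (plen (RR (2 * k))) (2 * hh * M) ((size (DD (2 * k))).+2 * M) => a b c d; clear; lia.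
rewrite ltn_pmul2r //; clear; lia.
Qed.

Lemma uniq_FF k : k < qq -> uniq (FF k).
Proof.
move=> H; apply: take_uniq; apply: filter_uniq.
exact: (shortest_uniq wb (RR_rep (two_lt H))).
Qed.

Lemma FF_notP k z : z \in FF k -> z \notin P.
Proof. by move/mem_take; rewrite mem_filter => /andP[]. Qed.

Lemma FF_disj k k' z : k < k' -> k' < qq -> z \in FF k' -> z \notin FF k.
Proof.
move=> H1 H2 Hz.
have Hk' := two_lt H2.
have Hk : 2 * k < m by apply: leq_ltn_trans Hk'; clear -H1; lia.
have Hk1 : 2 * k + 1 < 2 * k' by clear -H1; lia.
have [i [j Hd]] := DD_dec Hk.
have [i' [j' Hd']] := DD_dec Hk'.
have [HuP _ _ _] := uu_props Hk.
have [Hu'P _ Hu'x _] := uu_props Hk'.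
have Hi' : index (uu (2 * k)) P < i'.
  apply: (leq_trans (uu_idx_lt (ltnSn (2 * k)) _)); first by rewrite -addn1; apply: ltn_trans Hk1 Hk'.
  by rewrite -addn1; apply: (i_ge Hk1 Hk' Hd').
have := core esym wsym wb HP HxP Hd (RR_rep Hk) HuP Hd' (RR_rep Hk') Hu'P Hi' Hu'x (Hlen H2) Hz.
by apply: contra => /mem_take.
Qed.

Lemma count_main : 0 < M -> size P + qq * hh <= #|V|.
Proof.
move=> HM.
suff : forall n, n <= qq -> uniq (P ++ flatten [seq FF k | k <- iota 0 n]) /\
   size (P ++ flatten [seq FF k | k <- iota 0 n]) = size P + n * hh.
  case/(_ qq (leqnn _)) => /card_uniqP <- <-; exact: max_card.
elim => [|n IH] Hn.
  by rewrite /= cats0 addn0; split => //; apply: (shortest_uniq wb HP).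
have [IH1 IH2] := IH (ltnW Hn).
rewrite -addn1 iotaD map_cat flatten_cat /= cats0 catA cat_uniq size_cat IH2 size_FF //.
split; last by rewrite mulnDl mul1n addnA.
rewrite IH1 uniq_FF //= andbT.
apply/hasPn => z Hz; rewrite mem_cat negb_or (FF_notP Hz) /=.
apply/flatten_mapP => [[k]]; rewrite mem_iota add0n => /andP[_ Hk].
by apply/negP; apply: FF_disj Hn Hz.
Qed.

Lemma m_le_P : m <= size P.
Proof.
rewrite size_I; apply: leq_trans (size_undup _) _; rewrite size_map.
by apply: (uniq_leq_size Hvu) => v /Hvs [].
Qed.

Lemma M_pos : 0 < m -> 0 < M.
Proof.
rewrite size_I /rs; case Ev: vs => [|v vs'] //= _.
have : v \in vs by rewrite Ev mem_head.
case/Hvs => HvP Hvs' _ _.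
have [q [EP [_ Hp]]] := walk_cons (walkP HP).
rewrite EP in_cons (negbTE Hvs') /= in HvP.
case: q EP HvP Hp => [|y q] // _ _ /= /andP[Hy _].
by have := wb Hy; case/andP => H1 H2; apply: leq_trans H1 H2.
Qed.

Lemma final_nat : m ^ 2 <= 25 * M * #|V|.
Proof.
case: (posnP m) => Hm; first by rewrite Hm.
have HM := M_pos Hm.
have C := count_main HM; rewrite /qq /hh in C; have L := m_le_P.
apply: arith_main HM _.
move: (m %/ 4 * (m %/ 4 %/ M)) C L => a; clear; lia.
Qed.

Lemma final (R : rcfType) :
  (((size (undup [seq rep v | v <- vs]))%:R : R) <= 5%:R * Num.sqrt ((M * #|V|)%N%:R))%R.
Proof.
have -> : size (undup [seq rep v | v <- vs]) = m by rewrite size_I.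
by apply: real_main; rewrite mulnA final_nat.
Qed.

End G3.

Import Order.TTheory GRing.Theory Num.Theory.
Local Open Scope ring_scope.

Theorem lemma9 (R : rcfType) (V : finType) (e : rel V) (w : V -> V -> nat)
  (M : nat) (s t x : V) (P : seq V) (vs : seq V) (rep : V -> seq V) :
  (* undirected simple graph with integer weights in [1, M] *)
  (forall a b, e a b = e b a) ->
  (forall a, ~~ e a a) ->
  (forall a b, e a b -> w a b = w b a) ->
  (forall a b, e a b -> (1 <= w a b <= M)%N) ->
  (* P = P(s,t), the s-t path of a shortest path tree, a shortest s-t path *)
  shortest_in e w pred0 s t P ->
  (* x is a vertex on P(s,t) *)
  x \in P ->
  (* every replacement path = common prefix + detour disjoint from P + common suffix *)
  (forall v, v \in P -> v != s -> forall Rp, replacement e w s t v Rp ->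
     exists i j D, Rp = take i.+1 P ++ D ++ drop j P /\ all (fun y => y \notin P) D) ->
  (* vs = v_1, ..., v_k : the far-case-II vertices v <> s on P[s..x],
     ordered by increasing distance from s *)
  uniq vs ->
  sorted (fun a b => (index a P < index b P)%N) vs ->
  (forall v, v \in vs <->
     [/\ v \in P, v != s, (index v P <= index x P)%N & farII e w s t x v]) ->
  (* greedy choice of representatives *)
  (forall i, (i < size vs)%N ->
     replacement e w s t (nth s vs i) (rep (nth s vs i)) /\
     ((exists j, (j < i)%N /\ replacement e w s t (nth s vs i) (rep (nth s vs j))) ->
      exists j, (j < i)%N /\ rep (nth s vs i) = rep (nth s vs j))) ->
  (* |R_V| <= 5 sqrt(M n) *)
  ((size (undup [seq rep v | v <- vs]))%:R : R) <= 5%:R * Num.sqrt ((M * #|V|)%N%:R).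
Proof.
move=> H1 H2 H3 H4 H5 H6 H7 H8 H9 H10 H11.
apply: final; eassumption.
Qed.
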